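(* For all $\alpha>0$ and $\delta>0$ there exists $\varepsilon=\varepsilon(\alpha,\delta)>0$ such that for every $p>0$, every $\varepsilon$-typical $(\varepsilon,p)$-regular triple $(V_1,V_2,V_3)$ in a graph, in which each pair $(V_i,V_j)$ has density at least $\delta p$, contains $(1-\alpha)\min_i|V_i|$ vertex-disjoint triangles, each with one vertex in each of $V_1,V_2,V_3$.
   Context: For disjoint $X,Y$, $d(X,Y)=e(X,Y)/(|X||Y|)$; $x=(1\pm a)y$ means $x\in[(1-a)y,(1+a)y]$. A pair $(X,Y)$ is $(\varepsilon,p)$-regular if $|d(X,Y)-d(X',Y')|\le\varepsilon p$ for all $X'\subset X,Y'\subset Y$ with $|X'|\ge\varepsilon|X|,|Y'|\ge\varepsilon|Y|$; a triple of pairwise disjoint sets is $(\varepsilon,p)$-regular if all three of its pairs are. For a triple $(V_1,V_2,V_3)$ write $d(V_i,V_j)=d_{ij}p$. For $\{i,j,k\}=\{1,2,3\}$, a vertex $v\in V_i$ is $\varepsilon$-typical if with $N_j=N(v)\cap V_j$, $N_k=N(v)\cap V_k$: $|N_j|=(1\pm\varepsilon)d_{ij}p|V_j|$, $|N_k|=(1\pm\varepsilon)d_{ik}p|V_k|$, and there exist $N_j'\subset N_j$, $N_k'\subset N_k$ with $|N_j'|\ge(1-\varepsilon)|N_j|$, $|N_k'|\ge(1-\varepsilon)|N_k|$ such that $(N_j',N_k')$ is $(\varepsilon,p)$-regular of density $(1\pm\varepsilon)d_{jk}p$. The triple is $\varepsilon$-typical if it is $(\varepsilon,p)$-regular and for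 each $i$ all but at most $\varepsilon|V_i|$ vertices of $V_i$ are $\varepsilon$-typical. *)

(* Defs.v *)
From HB Require Import structures.
From mathcomp Require Import all_boot all_order all_algebra.
Set Implicit Arguments. Unset Strict Implicit. Unset Printing Implicit Defensive.
Import Order.TTheory GRing.Theory Num.Theory.
Local Open Scope ring_scope.

Section Defs.
Variable R : realFieldType.
Variable T : finType.
Variable e : rel T.

Definition edges (X Y : {set T}) : nat := #|[set u in setX X Y | e u.1 u.2]|.

Definition dens (X Y : {set T}) : R := (edges X Y)%:R / (#|X| * #|Y|)%:R.

Definition approx (a x y : R) : Prop := (1 - a) * y <= x /\ x <= (1 + a) * y.

Definition regular_pair (eps p : R) (X Y : {set T}) : Prop :=
  forall X' Y' : {set T}, X' \subset X -> Y' \subset Y ->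
    eps * #|X|%:R <= #|X'|%:R -> eps * #|Y|%:R <= #|Y'|%:R ->
    `|dens X Y - dens X' Y'| <= eps * p.

Definition regular_triple (eps p : R) (V1 V2 V3 : {set T}) : Prop :=
  [/\ regular_pair eps p V1 V2, regular_pair eps p V1 V3 & regular_pair eps p V2 V3].

(* v in Vi is eps-typical w.r.t. (Vj, Vk); note d_ij p = dens Vi Vj *)
Definition typical_vertex (eps p : R) (Vi Vj Vk : {set T}) (v : T) : Prop :=
  let Nj := [set u in Vj | e v u] in
  let Nk := [set u in Vk | e v u] in
  [/\ approx eps #|Nj|%:R (dens Vi Vj * #|Vj|%:R),
      approx eps #|Nk|%:R (dens Vi Vk * #|Vk|%:R) &
      (exists Nj' Nk' : {set T},
        [/\ Nj' \subset Nj, Nk' \subset Nk,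
            (1 - eps) * #|Nj|%:R <= #|Nj'|%:R,
            (1 - eps) * #|Nk|%:R <= #|Nk'|%:R &
            regular_pair eps p Nj' Nk' /\
            approx eps (dens Nj' Nk') (dens Vj Vk)])].

Definition mostly_typical (eps p : R) (Vi Vj Vk : {set T}) : Prop :=
  exists B : {set T}, #|B|%:R <= eps * #|Vi|%:R /\
    forall v, v \in Vi -> v \notin B -> typical_vertex eps p Vi Vj Vk v.

Definition typical_triple (eps p : R) (V1 V2 V3 : {set T}) : Prop :=
  [/\ regular_triple eps p V1 V2 V3,
      mostly_typical eps p V1 V2 V3,
      mostly_typical eps p V2 V1 V3 &
      mostly_typical eps p V3 V1 V2].

Definition cross_triangle (V1 V2 V3 : {set T}) (t : T * T * T) : bool :=
  [&& t.1.1 \in V1, t.1.2 \in V2, t.2 \in V3,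
      e t.1.1 t.1.2, e t.1.1 t.2 & e t.1.2 t.2].

Definition vertex_disjoint (s : seq (T * T * T)) : bool :=
  uniq (flatten [seq [:: t.1.1; t.1.2; t.2] | t <- s]).

End Defs.

(* Main.v *)
Require Import Defs.
From HB Require Import structures.
From mathcomp Require Import all_boot all_order all_algebra.
From mathcomp Require Import reals.
From mathcomp Require Import ring lra.
Import Order.TTheory GRing.Theory Num.Theory.
Local Open Scope ring_scope.

Lemma edges_sum (T : finType) (e : rel T) (X Y : {set T}) :
  edges e X Y = (\sum_(x in X) #|[set y in Y | e x y]|)%N.
Proof.
rewrite /edges -sum1_card big_mkcond.
set S := [set u in _ | _].
have -> : (\sum_(u : T * T) (if u \in S then 1 else 0) = \sum_(x : T) \sum_(y : T) (if (x,y) \in S then 1 else 0))%N.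
  by rewrite pair_bigA; apply: eq_bigr => -[x y].
rewrite [RHS]big_mkcond; apply: eq_bigr => x _.
case: ifP => xX.
  rewrite -sum1_card [RHS]big_mkcond.
  by apply: eq_bigr => y _; rewrite /S !inE /= xX.
by rewrite big1 // => y _; rewrite /S !inE /= xX.
Qed.

Lemma low_deg (R : realFieldType) (T : finType) (e : rel T) (eps p : R)
  (X Y Y' : {set T}) :
  0 <= eps -> regular_pair e eps p X Y -> Y' \subset Y ->
  eps * #|Y|%:R <= #|Y'|%:R ->
  #|[set x in X | #|[set y in Y' | e x y]|%:R < (dens R e X Y - eps * p) * #|Y'|%:R]|%:R
    <= eps * #|X|%:R.
Proof.
move=> eps0 reg sY hY.
set c := dens R e X Y - eps * p.
set L := [set x in X | _].
rewrite leNgt; apply/negP => HL.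
have sL : L \subset X by apply/subsetP => x; rewrite inE => /andP[].
have := reg L Y' sL sY (ltW HL) hY.
move=> /(le_trans (ler_norm _)) H1.
have H2 : c <= dens R e L Y' by rewrite /c; lra.
have [x xL] : exists x, x \in L.
  apply/set0Pn; apply: contraTneq HL => ->; rewrite cards0 -leNgt.
  by apply: mulr_ge0.
have Lpos : (0 : R) < #|L|%:R by rewrite ltr0n card_gt0; apply/set0Pn; exists x.
have Ypos : (0 : R) < #|Y'|%:R.
  move: (xL); rewrite inE => /andP[_ Hx].
  rewrite lt0r ler0n andbT; apply/negP => /eqP Y0.
  by move: Hx; rewrite Y0 mulr0 ltNge ler0n.
have : dens R e L Y' < c.
  rewrite /dens natrM ltr_pdivrMr ?mulr_gt0 // edges_sum natr_sum.
  apply: (@lt_le_trans _ _ (\sum_(x in L) c * #|Y'|%:R)).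
    apply: ltr_sum; first by apply/hasP; exists x => //; exact: mem_index_enum.
    by move=> y; rewrite inE => /andP[].
  by rewrite sumr_const le_eqVlt; apply/orP; left; apply/eqP; rewrite -mulr_natr; ring.
by rewrite ltNge H2.
Qed.

Lemma arith1 (R : realFieldType) (eps al D ep n n' d u m2 : R) :
  0 < eps -> 10 * eps <= al -> 10 * eps <= 1 -> 0 <= ep -> 10 * ep <= D ->
  0 <= n -> n' <= n -> (1 - eps) * n <= n' -> n <= (1 + eps) * (D * m2) ->
  (D - ep) * u <= d -> al * m2 < u -> 0 <= m2 ->
  eps * n' <= d - n + n'.
Proof.
move=> e0 ea e1 ep0 eD n0 nn' hn' hn hd hu m0.
have D0 : 0 <= D by lra.
have s1 : (1 - eps) * ((1 - eps) * n) <= (1 - eps) * n'.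
  by apply: ler_wpM2l => //; lra.
have s2 : 0 <= eps * eps * n by rewrite !mulr_ge0 //; lra.
have s3 : eps * n <= eps * ((1 + eps) * (D * m2)) by apply: ler_wpM2l => //; lra.
have Dm : 0 <= D * m2 by apply: mulr_ge0.
have s4 : eps * eps * (D * m2) <= (1/10) * eps * (D * m2).
  by apply: ler_wpM2r => //; nra.
have s5 : eps * (D * m2) <= (1/10) * al * (D * m2) by apply: ler_wpM2r => //; lra.
have u0 : 0 <= u.
  have : 0 <= al * m2 by apply: mulr_ge0 => //; lra.
  lra.
have s6 : (9/10) * D * u <= (D - ep) * u by apply: ler_wpM2r => //; lra.
have s7 : (9/10) * D * (al * m2) <= (9/10) * D * u.
  by apply: ler_wpM2l; lra.
have s8 : 0 <= al * (D * m2) by apply: mulr_ge0 => //; lra.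
nra.
Qed.

Lemma arith2 (R : realFieldType) (al m v s u : R) :
  0 <= m -> m <= v -> 0 <= s -> s < (1 - al) * m -> v - s <= u -> al * v < u.
Proof.
move=> m0 mv s0 hs hu.
have a1 : 0 < 1 - al.
  rewrite ltNge; apply/negP => h.
  have : (1 - al) * m <= 0 by rewrite mulr_le0_ge0.
  lra.
have : (1 - al) * m <= (1 - al) * v by apply: ler_wpM2l => //; lra.
lra.
Qed.

Lemma used_card (T : finType) (V : {set T}) (s : seq (T * T * T)) (f : T * T * T -> T) :
  (forall t, t \in s -> forall x, x \in [:: t.1.1; t.1.2; t.2] -> x \in V -> x = f t) ->
  (#|V :&: [set x | x \in flatten [seq [:: t.1.1; t.1.2; t.2] | t <- s]]| <= size s)%N.
Proof.
move=> H.
apply: (@leq_trans #|[set x in map f s]|).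
  apply: subset_leq_card; apply/subsetP => x; rewrite !inE => /andP[xV].
  move/flatten_mapP => [t ts xt].
  by rewrite (H t ts x xt xV); apply: map_f.
rewrite -(size_map f s) cardsE; exact: card_size.
Qed.

Lemma nbhd_big (R : realFieldType) (T : finType) (e : rel T) (eps alpha delta p : R)
  (V1 V2 U2 N2' : {set T}) (v : T) :
  0 < eps -> 10 * eps <= alpha -> 10 * eps <= delta -> 10 * eps <= 1 -> 0 < p ->
  delta * p <= dens R e V1 V2 -> U2 \subset V2 ->
  alpha * #|V2|%:R < #|U2|%:R ->
  (dens R e V1 V2 - eps * p) * #|U2|%:R <= #|[set y in U2 | e v y]|%:R ->
  N2' \subset [set u in V2 | e v u] ->
  (1 - eps) * #|[set u in V2 | e v u]|%:R <= #|N2'|%:R ->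
  #|[set u in V2 | e v u]|%:R <= (1 + eps) * (dens R e V1 V2 * #|V2|%:R) ->
  eps * #|N2'|%:R <= #|N2' :&: U2|%:R.
Proof.
move=> e0 ea ed e1 p0 hD sU hU hd sN hN' hN.
set N2 := [set u in V2 | e v u] in sN hN' hN *.
have c1 : (#|[set y in U2 | e v y]| <= #|N2' :&: U2| + #|N2 :\: N2'|)%N.
  apply: (leq_trans _ (leq_card_setU _ _).1).
  apply: subset_leq_card; apply/subsetP => y; rewrite !inE => /andP[yU ev].
  case yN: (y \in N2'); rewrite /= ?yU ?orbT //.
  by rewrite ev (subsetP sU y yU).
have c2 := cardsID N2' N2.
rewrite (setIidPr sN) in c2.
have c3 : (#|N2'| <= #|N2|)%N by apply: subset_leq_card.
have ep0 : 0 <= eps * p by apply: mulr_ge0; lra.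
have eD : 10 * (eps * p) <= dens R e V1 V2.
  apply: le_trans hD; rewrite mulrA; apply: ler_wpM2r; lra.
have c3' : (#|N2'|%:R : R) <= #|N2|%:R by rewrite ler_nat.
have := @arith1 R eps alpha (dens R e V1 V2) (eps * p) #|N2|%:R #|N2'|%:R
  #|[set y in U2 | e v y]|%:R #|U2|%:R #|V2|%:R e0 ea e1 ep0 eD (ler0n _ _)
  c3' hN' hN hd hU (ler0n _ _).
move=> H.
move: c1; rewrite -(ler_nat R) natrD => c1.
have c2' : (#|N2'|%:R + #|N2 :\: N2'|%:R : R) = #|N2|%:R by rewrite -natrD c2.
lra.
Qed.

Lemma extend (R : realFieldType) (alpha delta eps p : R) (T : finType) (e : rel T)
  (V1 V2 V3 : {set T}) (s : seq (T * T * T)) :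
  0 < eps -> 10 * eps <= alpha -> 10 * eps <= delta -> 10 * eps <= 1 -> 0 < p ->
  [disjoint V1 & V2] -> [disjoint V1 & V3] -> [disjoint V2 & V3] ->
  typical_triple e eps p V1 V2 V3 ->
  delta * p <= dens R e V1 V2 -> delta * p <= dens R e V1 V3 ->
  delta * p <= dens R e V2 V3 ->
  all (cross_triangle e V1 V2 V3) s -> vertex_disjoint s ->
  (size s)%:R < (1 - alpha) * (minn #|V1| (minn #|V2| #|V3|))%:R ->
  exists t, cross_triangle e V1 V2 V3 t && vertex_disjoint (t :: s).
Proof.
move=> e0 ea ed e1 p0 d12 d13 d23 [[r12 r13 r23] [B [Bc HB]] _ _] h12 h13 h23 Hall Hvd Hs.
have ct : forall t, t \in s -> cross_triangle e V1 V2 V3 t := fun t ts => allP Hall t ts.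
set W := [set x | x \in flatten [seq [:: t.1.1; t.1.2; t.2] | t <- s]].
set m := minn _ _ in Hs.
have s0 : (0 : R) <= (size s)%:R by [].
have Ucard : forall V : {set T}, (#|V :&: W| <= size s)%N -> (m <= #|V|)%N ->
   alpha * #|V|%:R < #|V :\: W|%:R.
  move=> V hVW hmV.
  apply: (@arith2 _ alpha m%:R _ (size s)%:R) => //; first by rewrite ler_nat.
  rewrite -(cardsID W V) natrD.
  have : (#|V :&: W|%:R : R) <= (size s)%:R by rewrite ler_nat.
  lra.
have U1c : alpha * #|V1|%:R < #|V1 :\: W|%:R.
  apply: Ucard; last by rewrite /m geq_minl.
  apply: (@used_card _ _ _ (fun t => t.1.1)) => t ts x.
  have := ct t ts; rewrite /cross_triangle => /andP[a /andP[b /andP[c _]]].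
  rewrite !inE => /or3P[/eqP->|/eqP->|/eqP->] xV //.
    by rewrite (disjointFr d12 xV) in b.
  by rewrite (disjointFr d13 xV) in c.
have U2c : alpha * #|V2|%:R < #|V2 :\: W|%:R.
  apply: Ucard; last by rewrite /m (leq_trans (geq_minr _ _)) // geq_minl.
  apply: (@used_card _ _ _ (fun t => t.1.2)) => t ts x.
  have := ct t ts; rewrite /cross_triangle => /andP[a /andP[b /andP[c _]]].
  rewrite !inE => /or3P[/eqP->|/eqP->|/eqP->] xV //.
    by rewrite (disjointFl d12 xV) in a.
  by rewrite (disjointFr d23 xV) in c.
have U3c : alpha * #|V3|%:R < #|V3 :\: W|%:R.
  apply: Ucard; last by rewrite /m (leq_trans (geq_minr _ _)) // geq_minr.
  apply: (@used_card _ _ _ (fun t => t.2)) => t ts x.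
  have := ct t ts; rewrite /cross_triangle => /andP[a /andP[b /andP[c _]]].
  rewrite !inE => /or3P[/eqP->|/eqP->|/eqP->] xV //.
    by rewrite (disjointFl d13 xV) in a.
  by rewrite (disjointFl d23 xV) in b.
set U1 := V1 :\: W in U1c *.
set U2 := V2 :\: W in U2c *.
set U3 := V3 :\: W in U3c *.
have a0 : 0 <= alpha by lra.
have eaV : forall V : {set T}, alpha * #|V|%:R < #|V :\: W|%:R -> eps * #|V|%:R <= #|V :\: W|%:R.
  move=> V hV; apply: le_trans (ltW hV); apply: ler_wpM2r => //; lra.
have L2c := @low_deg R T e eps p V1 V2 U2 (ltW e0) r12 (subsetDl V2 W) (eaV _ U2c).
have L3c := @low_deg R T e eps p V1 V3 U3 (ltW e0) r13 (subsetDl V3 W) (eaV _ U3c).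
set L2 := [set x in V1 | _] in L2c.
set L3 := [set x in V1 | _] in L3c.
have [v vin] : exists v, v \in U1 :\: (L2 :|: L3 :|: B).
  apply/set0Pn; apply/negP => /eqP H0.
  have : U1 \subset L2 :|: L3 :|: B by rewrite -setD_eq0 H0.
  move=> /subset_leq_card hc.
  have hZ : (#|L2 :|: L3 :|: B| <= #|L2| + #|L3| + #|B|)%N.
    apply: leq_trans (leq_card_setU _ _).1 _; rewrite leq_add2r.
    exact: (leq_card_setU _ _).1.
  have := leq_trans hc hZ; rewrite -(ler_nat R) !natrD => hc'.
  have : 3 * eps * #|V1|%:R <= alpha * #|V1|%:R by apply: ler_wpM2r => //; lra.
  lra.
move: vin; rewrite !inE => /andP[/norP[/norP[vL2 vL3] vB] /andP[vW vV1]].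
rewrite vV1 /= -leNgt in vL2; rewrite vV1 /= -leNgt in vL3.
have [ap2 ap3 [N2' [N3' [s2 s3 h2 h3 [rN dN]]]]] := HB v vV1 vB.
case: ap2 => _ ap2; case: ap3 => _ ap3.
have U2s : U2 \subset V2 by apply: subsetDl.
have U3s : U3 \subset V3 by apply: subsetDl.
have B2 := @nbhd_big R T e eps alpha delta p V1 V2 U2 N2' v e0 ea ed e1 p0 h12 U2s U2c vL2 s2 h2 ap2.
have B3 := @nbhd_big R T e eps alpha delta p V1 V3 U3 N3' v e0 ea ed e1 p0 h13 U3s U3c vL3 s3 h3 ap3.
have := rN _ _ (subsetIl N2' U2) (subsetIl N3' U3) B2 B3.
move=> /(le_trans (ler_norm _)) hreg.
case: dN => dN _.
have hpos : 0 < dens R e (N2' :&: U2) (N3' :&: U3).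
  have : (1 - eps) * (10 * eps * p) <= (1 - eps) * dens R e V2 V3.
    apply: ler_wpM2l; first lra.
    apply: le_trans h23; apply: ler_wpM2r; lra.
  have : 0 < eps * p by apply: mulr_gt0.
  nra.
have [[x2 x3]] : exists u, u \in [set u in setX (N2' :&: U2) (N3' :&: U3) | e u.1 u.2].
  apply/set0Pn; apply: contraTneq hpos => H0.
  by rewrite /dens /edges H0 cards0 mul0r ltxx.
rewrite !inE /= => /andP[/andP[/andP[x2N x2U] /andP[x3N x3U]] ex].
have := subsetP s2 x2 x2N; rewrite inE => /andP[x2V ev2].
have := subsetP s3 x3 x3N; rewrite inE => /andP[x3V ev3].
move: x2U x3U => /andP[x2W _] /andP[x3W _].
exists (v, x2, x3).
rewrite /cross_triangle /= vV1 x2V x3V ev2 ev3 ex /=.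
move: Hvd; rewrite /vertex_disjoint /= => ->.
rewrite !inE !negb_or vW x2W x3W !andbT.
have -> : v != x2 by apply/eqP => h; move: (disjointFr d12 vV1); rewrite h x2V.
have -> : v != x3 by apply/eqP => h; move: (disjointFr d13 vV1); rewrite h x3V.
by apply/eqP => h; move: (disjointFr d23 x2V); rewrite h x3V.
Qed.

Theorem proposition2p7 (R : realType) (alpha delta : R) :
  0 < alpha -> 0 < delta ->
  exists2 eps : R, 0 < eps &
    forall (p : R) (T : finType) (e : rel T) (V1 V2 V3 : {set T}),
      0 < p -> symmetric e -> irreflexive e ->
      [disjoint V1 & V2] -> [disjoint V1 & V3] -> [disjoint V2 & V3] ->
      typical_triple e eps p V1 V2 V3 ->
      delta * p <= dens R e V1 V2 -> delta * p <= dens R e V1 V3 ->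
      delta * p <= dens R e V2 V3 ->
      exists s : seq (T * T * T),
        [/\ all (cross_triangle e V1 V2 V3) s, vertex_disjoint s &
            (1 - alpha) * (minn #|V1| (minn #|V2| #|V3|))%:R <= (size s)%:R].
Proof.
move=> a0 d0.
set mu := Num.min alpha (Num.min delta 1).
have mu0 : 0 < mu by rewrite /mu !lt_min a0 d0 ltr01.
have mua : mu <= alpha by rewrite /mu ge_min lexx.
have mud : mu <= delta by rewrite /mu !ge_min lexx orbT.
have mu1 : mu <= 1 by rewrite /mu !ge_min lexx !orbT.
exists (mu / 10); first by apply: divr_gt0 => //; lra.
move=> p T e V1 V2 V3 p0 _ _ d12 d13 d23 tt h12 h13 h23.
have ten : 10 * (mu / 10) = mu by field.
set m := minn _ _.
have key : forall n : nat, exists s : seq (T * T * T),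
   [/\ all (cross_triangle e V1 V2 V3) s, vertex_disjoint s &
       (size s = n \/ (1 - alpha) * m%:R <= (size s)%:R)].
  elim=> [|n [s [hs1 hs2 hs3]]]; first by exists [::]; split => //; left.
  have [le|lt] := lerP ((1 - alpha) * m%:R) (size s)%:R.
    by exists s; split => //; right.
  case: hs3 => [sz|]; last by rewrite leNgt lt.
  have [t /andP[ht1 ht2]] := @extend R alpha delta (mu / 10) p T e V1 V2 V3 s
    ltac:(apply: divr_gt0 => //; lra) ltac:(lra) ltac:(lra) ltac:(lra) p0
    d12 d13 d23 tt h12 h13 h23 hs1 hs2 lt.
  by exists (t :: s); split => //=; [rewrite ht1 hs1 | left; rewrite sz].
have [s [hs1 hs2 [sz|hs3]]] := key m; exists s; split => //.
rewrite sz; have : 0 <= alpha * m%:R by apply: mulr_ge0 => //; lra.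
lra.
Qed.
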